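(* In the setting of the flag $\mathcal{F}=(\mathcal{F}_1,\dots,\mathcal{F}_r)$, $r\ge 2$, with $\mathcal{F}_i=\bigoplus_{j=0}^{s_i-1}\mathbb{F}_{q^m}\alpha^{lj}$ and $1\le s_1<\dots<s_r\le L$, assume $L<s=n/m$. Then every subspace of $\mathcal{F}$ is a subfield of $\mathbb{F}_{q^n}$ (i.e. $\mathcal{F}$ is a Galois flag and $\mathrm{Orb}(\mathcal{F})$ is a Galois flag code) if and only if the type of $\mathcal{F}$ is $(m,mL)$, i.e. $r=2$, $s_1=1$, $s_2=L$.
   Context: $q$ prime power; $m$ divides $n$; $\alpha$ is a primitive element of $\mathbb{F}_{q^n}$; $l$ is an integer with $1\le l<\frac{q^n-1}{q^m-1}$; $L$ is the degree of the minimal polynomial of $\alpha^l$ over $\mathbb{F}_{q^m}$ (so $L\mid n/m$). Subspaces are $\mathbb{F}_q$-subspaces of $\mathbb{F}_{q^n}$; a flag is a chain $\{0\}\subsetneq\mathcal{F}_1\subsetneq\cdots\subsetneq\mathcal{F}_r\subsetneq\mathbb{F}_{q^n}$, its type being the vector of dimensions (here $(ms_1,\dots,ms_r)$). A Galois flag is a flag all of whose subspaces are subfields of $\mathbb{F}_{q^n}$, and a Galois flag code is the orbit $\mathrm{Orb}_\beta$ of a Galois flag under multiplication by powers of some $\beta\in\mathbb{F}_{q^n}^\ast$. *)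

(* Defs.v *)
From HB Require Import structures.
From mathcomp Require Import all_boot all_order all_algebra all_field.
Set Implicit Arguments. Unset Strict Implicit. Unset Printing Implicit Defensive.
Import GRing.Theory.
Local Open Scope ring_scope.

(* An F-subspace V of the field L is a subfield: it contains 1, is closed
   under multiplication and under inversion of nonzero elements
   (closure under addition/opposite is automatic for a subspace). *)
Definition is_subfield (F : fieldType) (L : fieldExtType F) (V : {vspace L}) : Prop :=
  [/\ (1 : L) \in V,
      (forall x y, x \in V -> y \in V -> x * y \in V) &
      (forall x, x \in V -> x != 0 -> x^-1 \in V)].

Definition primitive_elt (F : fieldType) (L : fieldExtType F) (a : L) : Prop :=
  forall x : L, x != 0 -> exists k : nat, x = a ^+ k.

Definition flag_sub (F : fieldType) (L : fieldExtType F) (E : {vspace L})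
  (a : L) (l k : nat) : {vspace L} :=
  (\sum_(j < k) (E * <[a ^+ (l * j)]>))%VS.

(* Main.v *)
Require Import Defs.
From HB Require Import structures.
From mathcomp Require Import all_boot all_order all_algebra all_field.
From mathcomp Require Import zify.
Import GRing.Theory.
Local Open Scope ring_scope.

Section S.
Variables (F : fieldType) (L : fieldExtType F) (E : {subfield L}) (a : L) (l : nat).

Lemma flagE k : flag_sub E a l k = (\sum_(j < k) (E * <[(a ^+ l) ^+ j]>))%VS.
Proof. by apply: eq_bigr => j _; rewrite exprM. Qed.

Lemma flag_adj : flag_sub E a l (adjoin_degree E (a ^+ l)) = <<E; a ^+ l>>%VS.
Proof. by rewrite flagE Fadjoin_eq_sum. Qed.

Lemma flag1 : flag_sub E a l 1 = E.
Proof. by rewrite /flag_sub big_ord1 muln0 expr0 prodv1. Qed.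

Lemma adj_subfield (x : L) : is_subfield <<E; x>>%VS.
Proof.
split.
- exact: (mem1v <<E; x>>%AS).
- move=> u v Hu Hv; exact: (memvM (A := <<E; x>>%AS)).
- move=> u Hu _; by rewrite (memvV <<E; x>>%AS).
Qed.

End S.
Section S2.
Variables (F : fieldType) (L : fieldExtType F) (E : {subfield L}) (a : L) (l : nat).

Lemma flag_dim k : (\dim (flag_sub E a l k) <= k * \dim E)%N.
Proof.
apply: leq_trans (dimv_leq_sum _ _ _) _.
rewrite -[X in (_ <= X * _)%N]card_ord -sum_nat_const.
apply: leq_sum => j _; apply: leq_trans (dim_prodv _ _) _.
by rewrite dim_vline; case: (_ != 0); rewrite ?muln1 ?muln0.
Qed.

Lemma flag_big k : (2 <= k)%N -> is_subfield (flag_sub E a l k) ->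
  (adjoin_degree E (a ^+ l) <= k)%N.
Proof.
move=> k2 [H1 HM _].
set V := flag_sub E a l k.
have EV : (E <= V)%VS.
  rewrite /V /flag_sub (bigD1 (Ordinal (ltnW k2))) //= muln0 expr0 prodv1.
  exact: addvSl.
have bV : a ^+ l \in V.
  rewrite /V /flag_sub (bigD1 (Ordinal k2)) //= muln1.
  apply: (subvP (addvSl _ _)).
  by rewrite -[X in X \in _]mul1r; apply: memv_mul; [exact: mem1v | exact: memv_line].
have pV : forall i, (a ^+ l) ^+ i \in V.
  elim=> [|i IH]; first by rewrite expr0.
  by rewrite exprS HM.
have sub : (<<E; a ^+ l>> <= V)%VS.
  rewrite Fadjoin_eq_sum; apply/subv_sumP => i _.
  apply/prodvP => u v Hu /vlineP [c ->].
  by apply: HM; [apply: (subvP EV) | rewrite memvZ].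
have := dimvS sub; rewrite dim_Fadjoin => Hd.
have := leq_trans Hd (flag_dim k).
by rewrite leq_pmul2r // adim_gt0.
Qed.
End S2.

Lemma sf_subfield (F : fieldType) (L : fieldExtType F) (K : {subfield L}) :
  is_subfield (K : {vspace L}).
Proof.
split; first exact: mem1v.
- move=> u v Hu Hv; exact: memvM.
- by move=> u Hu _; rewrite memvV.
Qed.

Theorem mainTheorem6 (F : finFieldType) (L : fieldExtType F) (E : {subfield L})
    (a : L) (l : nat) (s : seq nat) :
  let q := #|F| in
  let n := \dim {: L} in
  let m := \dim E in
  let Lmin := (size (minPoly E (a ^+ l))).-1 in
  (m %| n)%N ->
  primitive_elt a ->
  (1 <= l)%N -> (l < (q ^ n - 1) %/ (q ^ m - 1))%N ->
  (2 <= size s)%N ->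
  sorted ltn s ->
  (1 <= head 0%N s)%N ->
  (last 0%N s <= Lmin)%N ->
  (Lmin < n %/ m)%N ->
  (forall i, (i < size s)%N -> is_subfield (flag_sub E a l (nth 0%N s i)))
    <-> s = [:: 1%N; Lmin].
Proof.
move=> q n m Lmin _ _ _ _ Hsz Hsort Hhead Hlast _.
have HL : Lmin = adjoin_degree E (a ^+ l) by rewrite /Lmin size_minPoly.
rewrite HL in Hlast *.
set d := adjoin_degree E (a ^+ l) in Hlast *.
split; last first.
  move=> -> [|[|i]] //= _.
  - by rewrite flag1; apply: sf_subfield.
  - by rewrite flag_adj; apply: adj_subfield.
case: s Hsz Hsort Hhead Hlast => [|x [|y t]] //= _ Hsort Hx Hlast H.
move: Hsort => /andP [Hxy Hp].
have Hy : (2 <= y)%N by apply: leq_ltn_trans Hx Hxy.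
have dy : (d <= y)%N by have := H 1%N isT; apply: flag_big.
case: t Hp Hlast H => [|z t] Hp Hlast H /=.
  have xd : x = 1%N.
    case: (ltnP 1 x) => x2; last by lia.
    have dx : (d <= x)%N by apply: (@flag_big _ _ E a l x x2 (H 0%N isT)).
    simpl in Hlast; clearbody d; lia.
  simpl in Hlast. have -> : y = d by clearbody d; lia.
  by rewrite xd.
exfalso.
have Hz : (y < last z t)%N.
  have := order_path_min ltn_trans Hp.
  by move/allP; apply; exact: mem_last.
simpl in Hlast; clearbody d; lia.
Qed.
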